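(* Let $\sigma$ be an erasing $k$-block substitution with $w_\epsilon\ne1^k$. Then for every $x\in f_\sigma(\mathbb I)\setminus\mathcal Q_2^0$, the fiber $f_\sigma^{-1}(x)$ is uncountable.
   Context: Notation: $\mathbb I=[0,1]$. $\mathcal Q_2^0$ is the set of dyadic rationals in $[0,1)$, i.e. the dyadic rationals of $\mathbb I$ other than $1$. $\{0,1\}^*$ and $\{0,1\}^\omega$ denote finite and infinite binary words, and $\epsilon$ is the empty word. For a word $w$, set $0.w=\sum_iw_i2^{-i}$. For $x\in(0,1]$, $\widetilde x$ is the unique infinite binary expansion of $x$ not ending in $0^\infty$. Fix $k\ge2$. An erasing $k$-block substitution is a map $\sigma:\{0,1\}^k\to\{0,1\}^*$ with exactly one block $w_\epsilon$ such that $\sigma(w_\epsilon)=\epsilon$. It acts blockwise on infinite words, concatenating the images of consecutive $k$-blocks. The map $f_\sigma:\mathbb I\to\mathbb I$ is defined by $f_\sigma(x)=0.\sigma(\widetilde x)$ if $x\in(0,1]$ and $\widetilde x\neq w_\epsilon^\infty$, and $f_\sigma(x)=0$ otherwise. *)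

(* Defs.v *)
From Stdlib Require Import Reals ClassicalEpsilon.
From Coquelicot Require Import Coquelicot.
From mathcomp Require Import ssreflect ssrfun ssrbool eqtype ssrnat seq fintype tuple.

Set Implicit Arguments.
Unset Strict Implicit.
Unset Printing Implicit Defensive.

(* Infinite binary words are functions nat -> bool (letter i at index i,
   i.e. w_{i+1} in the paper's 1-based indexing). Finite words: seq bool. *)
Definition iword := nat -> bool.

(* 0.w for a finite word w = sum_i w_i 2^{-i} (1-based). *)
Fixpoint fval (w : seq bool) : R :=
  match w with
  | [::] => 0%R
  | b :: w' => (((if b then 1 else 0) + fval w') / 2)%R
  end.

Definition iprefix (w : iword) (n : nat) : seq bool := mkseq w n.

Definition is_expansion (x : R) (w : iword) : Prop :=
  is_lim_seq (fun n => fval (iprefix w n)) x.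

Definition not_ending_in_zeros (w : iword) : Prop :=
  forall n, exists m, (n <= m)%N /\ w m = true.

(* x~ : the (unique, for x in (0,1]) infinite binary expansion of x not
   ending in 0^infinity; chosen by epsilon. *)
Definition tilde (x : R) : iword :=
  epsilon (inhabits (fun _ : nat => false))
    (fun w => is_expansion x w /\ not_ending_in_zeros w).

Definition block (k : nat) (w : iword) (n : nat) : k.-tuple bool :=
  [tuple w (k * n + val i)%N | i < k].

Definition subst_prefix (k : nat) (sigma : k.-tuple bool -> seq bool)
  (w : iword) (n : nat) : seq bool :=
  flatten [seq sigma (block k w i) | i <- iota 0 n].

(* 0.sigma(w) : value of the (finite or infinite) concatenated word,
   i.e. the limit of the values of its prefixes sigma(b_0)...sigma(b_{n-1})
   (a nondecreasing sequence bounded by 1). *)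
Definition subst_val (k : nat) (sigma : k.-tuple bool -> seq bool) (w : iword) : R :=
  real (Lim_seq (fun n => fval (subst_prefix sigma w n))).

Definition is_block_power (k : nat) (b : k.-tuple bool) (w : iword) : Prop :=
  forall n, block k w n = b.

Definition erasing_subst (k : nat) (sigma : k.-tuple bool -> seq bool)
  (weps : k.-tuple bool) : Prop :=
  sigma weps = [::] /\ forall b, sigma b = [::] -> b = weps.

(* f_sigma : I -> I (represented on R; only its values on [0,1] matter) *)
Definition f_sigma (k : nat) (sigma : k.-tuple bool -> seq bool)
  (weps : k.-tuple bool) (x : R) : R :=
  if excluded_middle_informative
       ((0 < x <= 1)%R /\ ~ is_block_power weps (tilde x))
  then subst_val sigma (tilde x) else 0%R.

Definition dyadic0 (x : R) : Prop :=
  (0 <= x < 1)%R /\ exists (m n : nat), x = (INR m / 2 ^ n)%R.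

Definition uncountable (P : R -> Prop) : Prop :=
  ~ exists g : R -> nat, forall y z, P y -> P z -> g y = g z -> y = z.

(* Main.v *)
Require Import Defs.
From Stdlib Require Import Reals Lra Lia ClassicalEpsilon FunctionalExtensionality.
From Coquelicot Require Import Coquelicot.
From mathcomp Require Import ssreflect ssrfun ssrbool eqtype ssrnat seq fintype tuple div.
From mathcomp Require Import zify.
Set Implicit Arguments.
Unset Strict Implicit.

Definition bv (b : bool) : R := if b then 1%R else 0%R.

Lemma bv_bounds b : (0 <= bv b <= 1)%R.
Proof. case: b => /=; lra. Qed.

Lemma p2pos n : (0 < 2 ^ n)%R.
Proof. apply pow_lt; lra. Qed.

Lemma fval_cat a b : fval (a ++ b) = (fval a + fval b / 2 ^ (size a))%R.
Proof.
elim: a => [|c a IH] /=.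
- field.
- rewrite IH. have := p2pos (size a). move=> H. field. lra.
Qed.

Lemma fval_bounds a : (0 <= fval a < 1)%R.
Proof.
elim: a => [|c a IH] /=; first lra.
have := bv_bounds c. rewrite /bv. case: c => /=; lra.
Qed.

Lemma INR_expn2 n : INR (2 ^ n)%N = (2 ^ n)%R.
Proof.
elim: n => [|n IH] /=; first by [].
rewrite expnS mult_INR IH /=. lra.
Qed.

Lemma fval_dyadic a : exists m : nat, fval a = (INR m / 2 ^ (size a))%R.
Proof.
elim: a => [|c a [m Hm]] /=.
- exists 0%N. simpl. field.
- exists ((if c then 2 ^ size a else 0) + m)%N. rewrite Hm plus_INR.
  have H := p2pos (size a).
  case: c => /=.
  + rewrite INR_expn2 /=. field. lra.
  + field. lra.
Qed.

Definition v (w : iword) n := fval (iprefix w n).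

Lemma v0 w : v w 0 = 0%R.
Proof. by []. Qed.

Lemma vS w n : v w n.+1 = (v w n + bv (w n) / 2 ^ n.+1)%R.
Proof.
rewrite /v /iprefix mkseqS -cats1 fval_cat size_mkseq /=.
have H := p2pos n. rewrite /bv. case: (w n); field; lra.
Qed.

Lemma v_mono w n : (v w n <= v w n.+1)%R.
Proof.
rewrite vS. have H := p2pos n.+1. have := bv_bounds (w n).
move=> [H1 _]. have : (0 <= bv (w n) / 2 ^ n.+1)%R.
{ apply Rmult_le_pos; first lra. left; apply Rinv_0_lt_compat; lra. }
lra.
Qed.

Lemma v_le w n m : (n <= m)%N -> (v w n <= v w m)%R.
Proof.
move=> /subnKC <-. elim: (m - n)%N => [|d IH]; first by rewrite addn0; lra.
rewrite addnS. have := v_mono w (n + d). lra.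
Qed.

Lemma v_upper w n m : (n <= m)%N -> (v w m <= v w n + / 2 ^ n - / 2 ^ m)%R.
Proof.
move=> /subnKC <-. elim: (m - n)%N => [|d IH]; first by rewrite addn0; lra.
rewrite addnS vS. move: IH. set p := (n + d)%N => IH.
have := bv_bounds (w p). move=> [_ H1].
have H := p2pos p.
have E : (/ 2 ^ p - / 2 ^ p.+1 = 1 / 2 ^ p.+1)%R.
{ simpl. field. lra. }
have : (bv (w p) / 2 ^ p.+1 <= 1 / 2 ^ p.+1)%R.
{ apply Rmult_le_compat_r; last lra. left; apply Rinv_0_lt_compat. simpl; lra. }
lra.
Qed.

Lemma v_le1 w m : (v w m <= 1)%R.
Proof.
have := @v_upper w 0 m (leq0n m). rewrite v0 /=. have := p2pos m.
move=> H. have : (0 < / 2 ^ m)%R by apply Rinv_0_lt_compat.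
lra.
Qed.

Lemma lim_ge (u : nat -> R) (l : R) N : (forall n, u n <= u n.+1)%R ->
  is_lim_seq u l -> (u N <= l)%R.
Proof.
move=> Hm Hl.
have Hle : forall n, (u N <= u (n + N)%coq_nat)%R.
{ move=> n. elim: n => [|n IH] /=; first lra. have := Hm (n + N)%coq_nat. lra. }
have := is_lim_seq_le (fun _ => u N) (fun n => u (n + N)%coq_nat) (u N) l Hle
  (is_lim_seq_const _) (proj1 (is_lim_seq_incr_n u N l) Hl).
by [].
Qed.

Lemma lim_le (u : nat -> R) (l : R) c : (forall n, u n <= c)%R ->
  is_lim_seq u l -> (l <= c)%R.
Proof.
move=> Hc Hl.
by have := is_lim_seq_le u (fun _ => c) l c Hc Hl (is_lim_seq_const _).
Qed.

Lemma v_eq_upto w1 w2 n : (forall i, (i < n)%N -> w1 i = w2 i) ->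
  forall m, (m <= n)%N -> v w1 m = v w2 m.
Proof.
move=> H. elim=> [|m IH] Hm; first by rewrite !v0.
rewrite !vS IH ?H //; by apply ltnW.
Qed.

Lemma uniq_asym x w1 w2 n : (forall i, (i < n)%N -> w1 i = w2 i) ->
  w1 n = false -> w2 n = true ->
  is_expansion x w1 -> is_expansion x w2 -> not_ending_in_zeros w2 -> False.
Proof.
move=> Heq H1 H2 E1 E2 N2.
set P := v w1 n.
have HP2 : v w2 n = P by rewrite /P (@v_eq_upto w1 w2 n Heq n (leqnn n)).
have Hn := p2pos n.+1.
have up : forall m, (v w1 m <= P + / 2 ^ n.+1)%R.
{ move=> m. have Hi : (0 < / 2 ^ n.+1)%R by apply Rinv_0_lt_compat.
  have V1 : v w1 n.+1 = P by rewrite vS H1 /= /P; lra.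
  case: (leqP m n.+1) => Hm.
  - have := v_le w1 Hm. lra.
  - have := v_upper w1 (ltnW Hm). have := p2pos m. move=> Hm'.
    have : (0 < / 2 ^ m)%R by apply Rinv_0_lt_compat. lra. }
have Xup := lim_le up E1.
case: (N2 n.+1) => j [Hj Hwj].
have Xlo := lim_ge j.+1 (v_mono w2) E2.
have : (P + / 2 ^ n.+1 + / 2 ^ j.+1 <= v w2 j.+1)%R.
{ rewrite vS Hwj /=. have := v_le w2 Hj. rewrite vS H2 HP2 /=. lra. }
have := p2pos j.+1. move=> Hj'. have : (0 < / 2 ^ j.+1)%R by apply Rinv_0_lt_compat.
lra.
Qed.

Lemma uniq_exp x w1 w2 : is_expansion x w1 -> is_expansion x w2 ->
  not_ending_in_zeros w1 -> not_ending_in_zeros w2 -> w1 = w2.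
Proof.
move=> E1 E2 N1 N2. apply functional_extensionality => n0.
apply: NNPP => Hne.
have ex : exists n, w1 n != w2 n by exists n0; apply/eqP.
case: (ex_minnP ex) => n Hn Hmin.
have Heq : forall i, (i < n)%N -> w1 i = w2 i.
{ move=> i Hi. apply/eqP. apply: contraLR Hi => Hi. rewrite -leqNgt. exact: Hmin. }
move: Hn. case E: (w1 n); case F: (w2 n) => // _.
- apply: (uniq_asym (x:=x) (w1:=w2) (w2:=w1) (n:=n)) => // i Hi. by rewrite Heq.
- exact: (uniq_asym (x:=x) (w1:=w1) (w2:=w2) (n:=n)).
Qed.

Lemma tilde_eq x w : is_expansion x w -> not_ending_in_zeros w -> tilde x = w.
Proof.
move=> E N. rewrite /tilde.
set P := (fun w0 => is_expansion x w0 /\ not_ending_in_zeros w0).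
have [E' N'] := epsilon_spec (inhabits (fun _ : nat => false)) P (ex_intro P w (conj E N)).
exact: uniq_exp E' E N' N.
Qed.

Section Subst.
Variable k : nat.
Hypothesis hk : (0 < k)%N.
Variable sigma : k.-tuple bool -> seq bool.
Variable weps : k.-tuple bool.
Hypothesis Hse : sigma weps = [::].

Lemma sp_S w n : subst_prefix sigma w n.+1 = subst_prefix sigma w n ++ sigma (block k w n).
Proof. by rewrite /subst_prefix -addn1 iotaD map_cat flatten_cat /= cats0. Qed.

Definition u w n := fval (subst_prefix sigma w n).

Lemma u_mono w n : (u w n <= u w n.+1)%R.
Proof.
rewrite /u sp_S fval_cat. have [H0 _] := fval_bounds (sigma (block k w n)).
have := p2pos (size (subst_prefix sigma w n)). move=> Hp.
have : (0 <= fval (sigma (block k w n)) / 2 ^ size (subst_prefix sigma w n))%R.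
{ apply Rmult_le_pos; first lra. left; apply Rinv_0_lt_compat; lra. }
lra.
Qed.

Lemma sv_eq w w' : (forall n, subst_prefix sigma w' (2 * n) = subst_prefix sigma w n) ->
  subst_val sigma w' = subst_val sigma w.
Proof.
move=> H. rewrite /subst_val.
rewrite -(Lim_seq_subseq (u w') (fun n => 2 * n)%N).
- f_equal. apply Lim_seq_ext => n. by rewrite /u H.
- move=> P [N HN]. exists N => n Hn. apply HN. apply/leP. move/leP: Hn => Hn. rewrite mul2n -addnn. exact: leq_trans Hn (leq_addr _ _).
- apply ex_lim_seq_incr. exact: u_mono.
Qed.

Lemma finite_case w : (exists N, forall n, (N <= n)%N -> block k w n = weps) ->
  dyadic0 (subst_val sigma w).
Proof.
move=> [N HN].
have E : forall n, subst_prefix sigma w (n + N) = subst_prefix sigma w N.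
{ elim=> [|n IH] //. rewrite addSn sp_S IH HN ?Hse ?cats0 //. by rewrite leq_addl. }
have L : subst_val sigma w = fval (subst_prefix sigma w N).
{ rewrite /subst_val -(Lim_seq_incr_n _ N).
  rewrite (Lim_seq_ext _ (fun _ => fval (subst_prefix sigma w N))).
  - by rewrite Lim_seq_const.
  - move=> n. have -> : (n + N)%coq_nat = (n + N)%N by []. by rewrite E. }
rewrite L. split; first exact: fval_bounds.
have [m Hm] := fval_dyadic (subst_prefix sigma w N).
by exists m, (size (subst_prefix sigma w N)).
Qed.

Section Constr.
Variable w : iword.
Variable e : nat -> nat.
Variable S : nat -> bool.

Definition s' (i : nat) : bool :=
  if excluded_middle_informative (exists n, e n = i /\ S n = true) then true else false.

Definition blk' (j : nat) : k.-tuple bool :=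
  if odd j == s' j./2 then block k w j./2 else weps.

Definition w' (p : nat) : bool := nth false (blk' (p %/ k)) (p %% k).

Lemma w'_at j r : (r < k)%N -> w' (k * j + r) = nth false (blk' j) r.
Proof.
move=> Hr. rewrite /w' mulnC divnMDl // divn_small // addn0.
by rewrite modnMDl modn_small.
Qed.

Lemma block_w' j : block k w' j = blk' j.
Proof.
apply eq_from_tnth => i. rewrite tnth_mktuple w'_at ?ltn_ord //.
by rewrite (tnth_nth false).
Qed.

Lemma blk'_even n : blk' (2 * n) = if s' n then weps else block k w n.
Proof.
rewrite /blk' mul2n odd_double doubleK. by case: (s' n).
Qed.

Lemma blk'_odd n : blk' (2 * n).+1 = if s' n then block k w n else weps.
Proof.
rewrite /blk' mul2n.
have -> : n.*2.+1./2 = n by rewrite -[n.*2.+1./2]/(uphalf n.*2) uphalf_double.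
rewrite /= odd_double /=. by case: (s' n).
Qed.

Lemma sp_w' n : subst_prefix sigma w' (2 * n) = subst_prefix sigma w n.
Proof.
elim: n => [|n IH] //.
rewrite mulnS add2n !sp_S IH !block_w' blk'_even blk'_odd -catA.
by case: (s' n); rewrite Hse ?cats0.
Qed.

Lemma s'_e : injective e -> forall n, s' (e n) = S n.
Proof.
move=> inj n. rewrite /s'. case: excluded_middle_informative => [[m [Hm HS]]|Hn].
- simpl. have E := inj _ _ Hm. subst m. by rewrite HS.
- case E: (S n) => //. exfalso. apply: Hn. by exists n.
Qed.

End Constr.
End Subst.

Lemma cantor (G : (nat -> bool) -> nat) :
  ~ (forall S T, G S = G T -> forall n, S n = T n).
Proof.
move=> Hinj.
pose pick n := epsilon (inhabits (fun _ : nat => false)) (fun S => G S = n).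
pose d m := negb (pick m m).
have Hp : G (pick (G d)) = G d.
{ exact: (epsilon_spec (inhabits (fun _ : nat => false)) (fun S => G S = G d) (ex_intro _ d erefl)). }
have := Hinj _ _ Hp (G d). rewrite /d /=. by case: (pick (G d) (G d)).
Qed.

Fixpoint iter_e (nxt : nat -> nat) (n : nat) : nat :=
  (match n with 0 => nxt 0 | m.+1 => nxt (iter_e nxt m).+1 end)%N.

Lemma iter_e_inj nxt : (forall N, (N <= nxt N)%N) -> injective (iter_e nxt).
Proof.
move=> Hn.
have lt : forall m n, (m < n)%N -> (iter_e nxt m < iter_e nxt n)%N.
{ move=> m n. elim: n => [|n IH] //. rewrite ltnS leq_eqVlt => /orP [/eqP ->|H].
  - simpl. exact: Hn.
  - have := IH H. have := Hn (iter_e nxt n).+1. simpl. lia. }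
move=> m n E. case: (ltngtP m n) => // H.
- have := lt _ _ H. rewrite E. by rewrite ltnn.
- have := lt _ _ H. rewrite E. by rewrite ltnn.
Qed.

Lemma lim_real u : ex_finite_lim_seq u -> is_lim_seq u (real (Lim_seq u)).
Proof. move=> [l Hl]. by rewrite (is_lim_seq_unique _ _ Hl). Qed.

Unset Implicit Arguments.

Theorem lemma3p3 (k : nat) (hk : (2 <= k)%N)
  (sigma : k.-tuple bool -> seq bool) (weps : k.-tuple bool)
  (Hsigma : erasing_subst sigma weps)
  (Hweps : weps <> [tuple true | _ < k])
  (x : R)
  (Hx_img : exists y, (0 <= y <= 1)%R /\ f_sigma sigma weps y = x)
  (Hx_dy : ~ dyadic0 x) :
  uncountable (fun y => (0 <= y <= 1)%R /\ f_sigma sigma weps y = x).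
Proof.
have hk0 : (0 < k)%N by lia.
case: Hsigma => Hse _.
case: Hx_img => y0 [Hy0 Hf0].
rewrite /f_sigma in Hf0.
destruct (excluded_middle_informative _) as [[Hy0' Hnbp] | Hno]; simpl in Hf0; last first.
{ exfalso. apply: Hx_dy. rewrite -Hf0. split; first lra. exists 0%N, 0%N. simpl. field. }
move: Hf0 Hnbp. set w := tilde y0 => Hf0 Hnbp.
have Hinf : forall N, exists n, (N <= n)%N /\ block k w n <> weps.
{ move=> N. apply: NNPP => H. apply: Hx_dy. rewrite -Hf0. apply: (finite_case Hse).
  exists N => n Hn. apply: NNPP => Hb. apply: H. by exists n. }
pose nxt N := proj1_sig (constructive_indefinite_description _ (Hinf N)).
have Hnxt : forall N, (N <= nxt N)%N /\ block k w (nxt N) <> weps.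
{ move=> N. rewrite /nxt. by case: (constructive_indefinite_description _ _). }
pose e := iter_e nxt.
have einj : injective e by apply iter_e_inj => N; case: (Hnxt N).
have egood : forall n, block k w (e n) <> weps by case=> [|n]; [exact: (proj2 (Hnxt 0%N)) | exact: (proj2 (Hnxt _))].
pose W S := w' weps w e S.
pose G S := real (Lim_seq (v (W S))).
have HGlim : forall S, is_lim_seq (v (W S)) (G S).
{ move=> S. apply: lim_real. apply: (ex_finite_lim_seq_incr _ 1) => n; [exact: v_mono | exact: v_le1]. }
have Hnez : forall S, not_ending_in_zeros (W S).
{ move=> S N. case Ew: [exists r : 'I_k, tnth weps r].
  - case/existsP: Ew => r Hr.
    pose j := if s' e S N then (2 * N)%N else (2 * N).+1.
    have Bj : blk' weps w e S j = weps.
    { rewrite /j; case E: (s' e S N); [by rewrite blk'_even E | by rewrite blk'_odd E]. }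
    exists (k * j + r)%N. split.
    + rewrite /j; case: (s' e S N); nia.
    + by rewrite /W w'_at ?ltn_ord // Bj -tnth_nth.
  - case: (Hinf N) => i [Hi Hb].
    have [r Hr] : exists r : 'I_k, tnth (block k w i) r.
    { apply: NNPP => H. apply: Hb. apply: eq_from_tnth => r.
      case E1: (tnth (block k w i) r); case E2: (tnth weps r) => //.
      - exfalso; apply: H; by exists r.
      - exfalso; move/negbT/existsPn: Ew => /(_ r); by rewrite E2. }
    pose j := if s' e S i then (2 * i).+1 else (2 * i)%N.
    have Bj : blk' weps w e S j = block k w i.
    { rewrite /j; case E: (s' e S i); [by rewrite blk'_odd E | by rewrite blk'_even E]. }
    exists (k * j + r)%N. split.
    + rewrite /j; case: (s' e S i); nia.
    + by rewrite /W w'_at ?ltn_ord // Bj -tnth_nth. }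
have Htil : forall S, tilde (G S) = W S by move=> S; apply: tilde_eq; [exact: HGlim | exact: Hnez].
have Hblk : forall S i, exists j, block k (W S) j = block k w i.
{ move=> S i. case E: (s' e S i).
  - exists (2 * i).+1. by rewrite /W block_w' // blk'_odd E.
  - exists (2 * i)%N. by rewrite /W block_w' // blk'_even E. }
have Hrange : forall S, (0 < G S <= 1)%R.
{ move=> S. split; last exact: lim_le (v_le1 _) (HGlim S).
  case: (Hnez S 0%N) => j [_ Hj].
  have := lim_ge j.+1 (v_mono _) (HGlim S).
  rewrite vS Hj /=. have := v_le (W S) (leq0n j). rewrite v0. have := p2pos j.+1. move=> Hp.
  have : (0 < 1 / 2 ^ j.+1)%R by apply Rdiv_lt_0_compat; lra.
  rewrite /bv /=. lra. }
have Hf : forall S, f_sigma sigma weps (G S) = x.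
{ move=> S. rewrite /f_sigma. destruct (excluded_middle_informative _) as [HH | Hn]; simpl.
  - rewrite Htil -Hf0. apply: sv_eq. exact: sp_w'.
  - exfalso. apply: Hn. split; first exact: Hrange. rewrite Htil => Hbp.
    case: (Hblk S (e 0%N)) => j Hj. apply: (egood 0%N). by rewrite -Hj Hbp. }
have HGinj : forall S T, G S = G T -> forall n, S n = T n.
{ move=> S T E n. have WE : W S = W T by rewrite -!Htil E.
  apply: NNPP => Hne.
  have := f_equal (fun W0 => block k W0 (2 * e n)%N) WE.
  rewrite /= /W !block_w' // !blk'_even !s'_e //.
  move: Hne. case: (S n); case: (T n) => //= _ H; apply: (egood n); by rewrite ?H // -H. }
move=> [g Hg]. apply: (@cantor (fun S => g (G S))) => S T E. apply: HGinj. apply: Hg => //.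
- split; [have := Hrange S; lra | exact: Hf].
- split; [have := Hrange T; lra | exact: Hf].
Qed.
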